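(* For every integer $n\ge 10$ and every integer $m$ with $3n-11\le m\le \left\lfloor \frac{n-1}{2} \right\rfloor \left\lceil \frac{n-1}{2} \right\rceil +2$, there exists a non-bipartite $K_4^-$-saturated graph with $n$ vertices and $m$ edges.
   Context: All graphs are finite and simple. $K_4^-$ denotes the graph obtained from the complete graph $K_4$ by deleting one edge. For a graph $H$, a graph $G$ is $H$-saturated if $G$ contains no copy of $H$ as a subgraph, but for every pair of nonadjacent vertices $u,v$ of $G$, the graph $G+uv$ contains at least one copy of $H$. This is part (b) of the theorem. *)

(* Defs.v *)
From mathcomp Require Import all_boot.
Set Implicit Arguments. Unset Strict Implicit. Unset Printing Implicit Defensive.

Definition simple_graph (T : finType) (e : rel T) : Prop :=
  irreflexive e /\ symmetric e.

(* number of edges: unordered pairs, counted as ordered pairs (x,y) with x<y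
   in the enumeration order given by enum_rank *)
Definition num_edges (T : finType) (e : rel T) : nat :=
  #|[set p : T * T | (enum_rank p.1 < enum_rank p.2) && e p.1 p.2]|.

(* K4^- = K4 minus the edge cd, on vertices a,b,c,d: edges ab ac ad bc bd.
   A (not necessarily induced) subgraph copy: four distinct vertices
   carrying these five edges. *)
Definition has_K4minus (T : finType) (e : rel T) : Prop :=
  exists a b c d : T,
    [/\ uniq [:: a; b; c; d],
        e a b, e a c, e a d & (e b c && e b d)].

Definition add_edge (T : finType) (e : rel T) (u v : T) : rel T :=
  fun x y => e x y || ((x == u) && (y == v)) || ((x == v) && (y == u)).

Definition K4minus_saturated (T : finType) (e : rel T) : Prop :=
  ~ has_K4minus e /\
  forall u v : T, u != v -> ~~ e u v -> has_K4minus (add_edge e u v).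

Definition bipartite (T : finType) (e : rel T) : Prop :=
  exists f : T -> bool, forall x y, e x y -> f x != f y.

(* Main.v *)
Require Import Defs.
From mathcomp Require Import all_boot zify.
Set Implicit Arguments. Unset Strict Implicit. Unset Printing Implicit Defensive.

Definition E (a c1 c2 K u v : nat) : bool :=
 [|| (u < a) && (a <= v < a + c1),
     (0 < u < a) && (a + c1 <= v < a+c1+c2),
     (a + c1 <= u < a+c1+c2) && (a+c1+c2 <= v < a+c1+c2+K),
     (u == 0) && (a+c1+c2 <= v < a+c1+c2+K)
   | (a <= u < a + K) && (v == u + (c1 + c2))].

Definition ee a c1 c2 K u v := E a c1 c2 K u v || E a c1 c2 K v u.

Lemma E_lt a c1 c2 K u v : 0 < a -> 0 < c1 -> E a c1 c2 K u v -> u < v.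
Proof. rewrite /E. lia. Qed.

Lemma eeE a c1 c2 K u v : 0 < a -> 0 < c1 -> u < v -> ee a c1 c2 K u v = E a c1 c2 K u v.
Proof.
move=> h1 h2 huv; rewrite /ee; case: (E _ _ _ _ v u) /idP => [/E_lt|]; last by rewrite orbF.
by move=> /(_ h1 h2); lia.
Qed.

Lemma ee_irr a c1 c2 K u : 0 < a -> 0 < c1 -> ee a c1 c2 K u u = false.
Proof. move=> h1 h2; rewrite /ee orbb; apply/negP=> /E_lt; lia. Qed.

Lemma eeC a c1 c2 K u v : ee a c1 c2 K u v = ee a c1 c2 K v u.
Proof. by rewrite /ee orbC. Qed.

Lemma tri_sorted a c1 c2 K u v w : 3 <= a -> K <= c1 -> u < v -> v < w ->
  E a c1 c2 K u v -> E a c1 c2 K v w -> E a c1 c2 K u w ->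
  u = 0 /\ a <= v < a + K /\ w = v + (c1 + c2).
Proof. rewrite /E. lia. Qed.

Definition P3 a c1 c2 K u v w := u = 0 /\ a <= v < a + K /\ w = v + (c1 + c2).
Definition T3 a c1 c2 K u v w :=
  P3 a c1 c2 K u v w \/ P3 a c1 c2 K u w v \/ P3 a c1 c2 K v u w \/
      P3 a c1 c2 K v w u \/ P3 a c1 c2 K w u v \/ P3 a c1 c2 K w v u.

Lemma tri_any a c1 c2 K u v w : 3 <= a -> 1 <= c1 -> K <= c1 ->
  ee a c1 c2 K u v -> ee a c1 c2 K v w -> ee a c1 c2 K u w -> T3 a c1 c2 K u v w.
Proof.
move=> ha hc hK.
have key : forall x y z, x < y -> y < z -> ee a c1 c2 K x y -> ee a c1 c2 K y z ->
   ee a c1 c2 K x z -> P3 a c1 c2 K x y z.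
  move=> x y z hxy hyz; rewrite !eeE //; try lia.
  by move=> h1 h2 h3; apply: tri_sorted h1 h2 h3.
move=> h1 h2 h3.
have h1' := h1; have h2' := h2; have h3' := h3.
rewrite eeC in h1'; rewrite eeC in h2'; rewrite eeC in h3'.
rewrite /T3.
have [l1|l1|l1] := ltngtP u v; last by subst; rewrite ee_irr in h1; lia.
- have [l2|l2|l2] := ltngtP v w; last by subst; rewrite ee_irr in h2; lia.
  + by move: (key _ _ _ l1 l2 h1 h2 h3); tauto.
  + have [l3|l3|l3] := ltngtP u w; last by subst; rewrite ee_irr in h3; lia.
    * by move: (key _ _ _ l3 l2 h3 h2' h1); tauto.
    * by move: (key _ _ _ l3 l1 h3' h1 h2'); tauto.
- have [l2|l2|l2] := ltngtP v w; last by subst; rewrite ee_irr in h2; lia.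
  + have [l3|l3|l3] := ltngtP u w; last by subst; rewrite ee_irr in h3; lia.
    * by move: (key _ _ _ l1 l3 h1' h3 h2); tauto.
    * by move: (key _ _ _ l2 l3 h2 h3' h1'); tauto.
  + by move: (key _ _ _ l2 l1 h2' h1' h3'); tauto.
Qed.

Lemma noK4_nat a c1 c2 K x y z w : 3 <= a -> 1 <= c1 -> K <= c1 ->
  uniq [:: x; y; z; w] -> ee a c1 c2 K x y -> ee a c1 c2 K x z -> ee a c1 c2 K x w ->
  ee a c1 c2 K y z -> ee a c1 c2 K y w -> False.
Proof.
move=> ha hc hK hu h1 h2 h3 h4 h5.
have t1 := tri_any ha hc hK h1 h4 h2.
have t2 := tri_any ha hc hK h1 h5 h3.
move: hu; rewrite /= !inE !negb_or => /andP[/and3P[n1 n2 n3] /andP[/andP[n4 n5] /andP[n6 _]]].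
move: t1 t2; rewrite /T3 /P3; lia.
Qed.

Definition addR (R : nat -> nat -> bool) u v x y :=
  R x y || (x == u) && (y == v) || (x == v) && (y == u).

Definition K4n (R : nat -> nat -> bool) n :=
  exists x y z w, [/\ x < n, y < n, z < n, w < n &
   [/\ uniq [:: x; y; z; w], R x y, R x z, R x w & R y z && R y w]].

Section Edges.
Variables a c1 c2 K : nat.
Hypotheses (ha : 3 <= a) (hc : 2 <= c1) (hK1 : 1 <= K) (hK : K <= c1).
Local Notation e := (ee a c1 c2 K).

Lemma eAC1 u v : u < a -> a <= v < a + c1 -> e u v.
Proof. by move=> h1 h2; rewrite /ee /E h1 h2. Qed.
Lemma eAC2 u v : 0 < u < a -> a + c1 <= v < a + c1 + c2 -> e u v.
Proof. by move=> h1 h2; rewrite /ee /E h1 h2 !orbT. Qed.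
Lemma eC2Q u v : a + c1 <= u < a + c1 + c2 -> a + c1 + c2 <= v < a + c1 + c2 + K -> e u v.
Proof. by move=> h1 h2; rewrite /ee /E h1 h2 !orbT. Qed.
Lemma exQ v : a + c1 + c2 <= v < a + c1 + c2 + K -> e 0 v.
Proof. by move=> h2; rewrite /ee /E h2 eqxx !orbT. Qed.
Lemma epq u v : a <= u < a + K -> v = u + (c1 + c2) -> e u v.
Proof. by move=> h1 ->; rewrite /ee /E h1 eqxx !orbT. Qed.

Lemma addR_old (R : nat -> nat -> bool) u v x y : R x y -> addR R u v x y.
Proof. by rewrite /addR => ->. Qed.
Lemma addR_new (R : nat -> nat -> bool) u v : addR R u v u v.
Proof. by rewrite /addR !eqxx orbT. Qed.
Lemma addR_new' (R : nat -> nat -> bool) u v : addR R u v v u.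
Proof. by rewrite /addR !eqxx !orbT. Qed.

Ltac edge1 := first [ apply: eAC1; lia | apply: eAC2; lia | apply: eC2Q; lia
   | apply: exQ; lia | apply: epq; lia ].
Ltac edge := first [ exact: addR_new | exact: addR_new' | apply: addR_old;
   first [ edge1 | rewrite eeC; edge1 ] ].
Ltac fin := split; [lia..|split; [rewrite /= !inE; lia|edge|edge|edge|apply/andP; split; edge]].

Lemma sat_sorted u v :
  u < v < a + c1 + c2 + K -> ~~ e u v ->
  K4n (addR e u v) (a + c1 + c2 + K).
Proof.
move=> /andP[huv hvn] /negP hne.
rewrite /K4n.
case: (ltnP v a) => hva.
  by exists u, v, a, a.+1; fin.
case: (ltnP u a) => hua.
  case: (ltnP v (a + c1 + c2)) => hvN.
    have vC2 : a + c1 <= v.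
      by rewrite leqNgt; apply/negP => h; apply: hne; apply: eAC1; lia.
    have u0 : u = 0.
      by apply/eqP; rewrite eqn_leq leqn0; apply/negP => h; apply: hne; apply: eAC2; lia.
    by subst u; exists 0, (a + c1 + c2), v, a; fin.
  have u0 : 0 < u.
    by rewrite lt0n; apply/negP => /eqP h; apply: hne; rewrite h; apply: exQ; lia.
  by exists v, (v - (c1 + c2)), u, 0; fin.
case: (ltnP v (a + c1 + c2)) => hvN.
  by case: (ltnP u (a + c1)) => ?; case: (ltnP v (a + c1)) => ?; exists u, v, 1, 2; fin.
case: (ltnP u (a + c1)) => huC.
  have hp : u < a + K -> v != u + (c1 + c2).
    by move=> h; apply/negP => /eqP h'; apply: hne; apply: epq; lia.
  case: (ltnP u (a + K)) => huK.
    have hp' := hp huK.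
    by exists v, 0, u, (v - (c1 + c2)); fin.
  by exists v, 0, u, (v - (c1 + c2)); fin.
case: (ltnP u (a + c1 + c2)) => huN.
  by exfalso; apply: hne; apply: eC2Q; lia.
by exists u, 0, v, (u - (c1 + c2)); fin.
Qed.
End Edges.

Lemma orb5 (b1 b2 b3 b4 b5 : bool) :
  ~~ (b1 && b2) -> ~~ (b1 && b3) -> ~~ (b1 && b4) -> ~~ (b1 && b5) ->
  ~~ (b2 && b3) -> ~~ (b2 && b4) -> ~~ (b2 && b5) ->
  ~~ (b3 && b4) -> ~~ (b3 && b5) -> ~~ (b4 && b5) ->
  nat_of_bool [|| b1, b2, b3, b4 | b5] = b1 + b2 + b3 + b4 + b5.
Proof. by case: b1; case: b2; case: b3; case: b4; case: b5. Qed.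
Lemma cnt a c1 c2 K u v : 0 < a -> K <= c1 -> nat_of_bool (E a c1 c2 K u v) =
  ((0 <= u < a) && (a <= v < a + c1)) +
     ((1 <= u < a) && (a + c1 <= v < a+c1+c2)) +
     ((a + c1 <= u < a+c1+c2) && (a+c1+c2 <= v < a+c1+c2+K)) +
     ((0 <= u < 1) && (a+c1+c2 <= v < a+c1+c2+K))
   + ((a <= u < a + K) && (v == u + (c1 + c2))).
Proof. move=> h0 h; rewrite /E orb5 //; lia. Qed.

Lemma sumI n lo hi : \sum_(i < n) ((lo <= i) && (i < hi)) = minn hi n - minn lo n.
Proof.
elim: n => [|n IH]; first by rewrite big_ord0; lia.
rewrite big_ord_recr /= IH; case: (lo <= n) /idP; case: (n < hi) /idP => /= ? ?; lia.
Qed.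

Lemma sumEq n (c : nat) : \sum_(i < n) (nat_of_ord i == c) = (c < n).
Proof.
elim: n => [|n IH]; first by rewrite big_ord0.
rewrite big_ord_recr /= IH; case: (n == c) /eqP => /= ?; lia.
Qed.

Lemma sum_prodI n l1 h1 l2 h2 :
  \sum_(x < n) \sum_(y < n) ((l1 <= x < h1) && (l2 <= y < h2)) =
  (minn h1 n - minn l1 n) * (minn h2 n - minn l2 n).
Proof.
rewrite -!sumI big_distrl /=; apply: eq_bigr => x _; rewrite big_distrr /=.
by apply: eq_bigr => y _; rewrite mulnb.
Qed.

Lemma count_E a c1 c2 K : 0 < a -> K <= c1 ->
  \sum_(x < a + c1 + c2 + K) \sum_(y < a + c1 + c2 + K) E a c1 c2 K x y
  = a * c1 + (a - 1) * c2 + c2 * K + K + K.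
Proof.
move=> ha hK; set n := a + c1 + c2 + K.
under eq_bigr => x _ do under eq_bigr => y _ do rewrite cnt //.
under eq_bigr => x _ do rewrite !big_split.
rewrite !big_split !sum_prodI.
have -> : \sum_(x < n) \sum_(y < n) ((a <= x < a + K) && (nat_of_ord y == x + (c1 + c2)))
   = \sum_(x < n) ((a <= x) && (x < a + K)).
  apply: eq_bigr => x _.
  case: (a <= x < a + K) /idP => h /=; last by rewrite big1.
  rewrite sumEq; have -> : x + (c1 + c2) < n by move: h; rewrite /n; lia.
  done.
rewrite !sumI /n.
rewrite !(minn_idPl (_ : _ <= a + c1 + c2 + K)); try lia.
rewrite /= !addKn !subn0 mul1n. done.
Qed.

Lemma K4n_ext (R R' : nat -> nat -> bool) n :
  (forall x y, R x y = R' x y) -> K4n R n -> K4n R' n.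
Proof.
move=> h [x [y [z [w [hx hy hz hw [hu h1 h2 h3 h4]]]]]].
by exists x, y, z, w; split => //; split; rewrite -?h.
Qed.

Lemma addR_sym (R : nat -> nat -> bool) u v x y : addR R u v x y = addR R v u x y.
Proof. by rewrite /addR -orbA (orbC (_ && _)) orbA. Qed.

Lemma K4_lift a c1 c2 K N (u v : 'I_N) :
  K4n (addR (ee a c1 c2 K) u v) N ->
  has_K4minus (add_edge (fun x y : 'I_N => ee a c1 c2 K x y) u v).
Proof.
move=> [x [y [z [w [hx hy hz hw [hu h1 h2 h3 h4]]]]]].
exists (Ordinal hx), (Ordinal hy), (Ordinal hz), (Ordinal hw).
split => //.
Qed.

Lemma construct a c1 c2 K : 3 <= a -> 2 <= c1 -> 1 <= K -> K <= c1 ->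
  exists e : rel 'I_(a + c1 + c2 + K),
    [/\ simple_graph e, ~ bipartite e, K4minus_saturated e &
        num_edges e = a * c1 + (a - 1) * c2 + c2 * K + K + K].
Proof.
move=> ha hc hK1 hK.
set N := a + c1 + c2 + K.
exists (fun x y : 'I_N => ee a c1 c2 K x y); split.
- split; first by move=> x; rewrite ee_irr //; lia.
  by move=> x y; rewrite eeC.
- move=> [f hf].
  have h0 : 0 < N by rewrite /N; lia.
  have h1 : a < N by rewrite /N; lia.
  have h2 : a + c1 + c2 < N by rewrite /N; lia.
  have e1 := hf (Ordinal h0) (Ordinal h1) (@eAC1 a c1 c2 K 0 a ltac:(lia) ltac:(lia)).
  have e2 := hf (Ordinal h1) (Ordinal h2) (@epq a c1 c2 K a (a + c1 + c2) ltac:(lia) ltac:(lia)).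
  have e3 := hf (Ordinal h0) (Ordinal h2) (@exQ a c1 c2 K (a + c1 + c2) ltac:(lia)).
  move: e1 e2 e3.
  case: (f (Ordinal h0)); case: (f (Ordinal h1)); case: (f (Ordinal h2)) => //;
  try (by []); try lia.
- split.
  + move=> [x [y [z [w [hu h1 h2 h3 /andP[h4 h5]]]]]].
    have hu' : uniq [:: val x; val y; val z; val w].
      by rewrite -[[:: val x; _; _; _]]/(map val [:: x; y; z; w]) (map_inj_uniq val_inj).
    have hc1 : 1 <= c1 by lia.
    exact: (noK4_nat ha hc1 hK hu' h1 h2 h3 h4 h5).
  + move=> u v huv hne; apply: K4_lift.
    have huv' : val u != val v by [].
    case: (ltngtP (val u) (val v)) => l.
    * apply: (sat_sorted ha hc hK1 hK) => //.
      by rewrite l /=; exact: ltn_ord.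
    * apply: (K4n_ext (R := addR (ee a c1 c2 K) v u)).
        by move=> x y; rewrite addR_sym.
      apply: (sat_sorted ha hc hK1 hK); first by rewrite l /=; exact: ltn_ord.
      by rewrite eeC.
    * by move: huv'; rewrite l eqxx.
- rewrite -count_E; try lia.
  rewrite /num_edges.
  transitivity #|[set p : 'I_N * 'I_N | E a c1 c2 K p.1 p.2]|.
    apply: eq_card => p; rewrite !inE !enum_rank_ord /=.
    case: (ltnP p.1 p.2) => l /=.
      by rewrite eeE //; lia.
    by case: (E _ _ _ _ p.1 p.2) /idP => // /E_lt; lia.
  rewrite pair_bigA /= -sum1_card big_mkcond /=.
  by apply: eq_bigr => p _; rewrite inE; case: (E _ _ _ _ _ _).
Qed.

Lemma choose_a n m A : 3 <= A -> 2 * A <= n - 1 -> 3 * n - 11 <= m ->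
  m <= A * (n - A - 2) + n - A ->
  exists a, 3 <= a <= A /\ a * (n - a - 2) + 4 <= m <= a * (n - a - 2) + n - a.
Proof.
elim: A => [|A IH] hA h2A hlo hhi; first by lia.
case: (ltnP A 3) => hA3.
  have eA : A = 2 by lia.
  subst A; exists 3; split; first by [].
  move: hlo hhi; nia.
case: (leqP m (A * (n - A - 2) + n - A)) => hm.
  have [a [h1 h2]] := IH hA3 ltac:(lia) hlo hm.
  by exists a; split => //; lia.
exists A.+1; split; first by lia.
apply/andP; split => //.
have [r hr] : exists r, n = 2 * A + 3 + r by exists (n - (2 * A + 3)); lia.
subst n.
move: hm; nia.
Qed.

Lemma halves n : 10 <= n -> 2 * (n.-1)./2 <= n - 1 <= 2 * (n.-1)./2 + 1 /\ n./2 = n - 1 - (n.-1)./2.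
Proof.
move=> hn.
have a1 := leqnn (n./2); rewrite leq_half_double in a1.
have a2 := ltnSn (n./2); rewrite ltn_half_double in a2.
have b1 := leqnn ((n.-1)./2); rewrite leq_half_double in b1.
have b2 := ltnSn ((n.-1)./2); rewrite ltn_half_double in b2.
move: a1 a2 b1 b2; rewrite -!muln2; lia.
Qed.

Theorem theorem1p2 (n m : nat) :
  10 <= n ->
  3 * n - 11 <= m <= (n.-1)./2 * n./2 + 2 ->
  exists e : rel 'I_n,
    [/\ simple_graph e, ~ bipartite e, K4minus_saturated e & num_edges e = m].
Proof.
move=> hn /andP[lo hi].
have [hh1 hh2] := halves hn.
move: hi hh1; rewrite hh2; move: ((n.-1)./2) => h hi hh1.
case: (leqP m (h * (n - h - 2) + n - h)) => hm.
  have [a [/andP[a3 ah] /andP[alo ahi]]] := @choose_a n m h ltac:(lia) ltac:(lia) lo hm.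
  have [r hr] : exists r, n = a + 4 + r by exists (n - (a + 4)); lia.
  subst n.
  have er : a + 4 + r - a - 2 = r + 2 by lia.
  have er2 : a + 4 + r - a = r + 4 by lia.
  rewrite ?er in alo ahi; rewrite ?er2 in ahi.
  pose c2 := m - (a * (r + 2) + 4).
  pose c1 := r + 2 - c2.
  have hc2 : c2 <= r by rewrite /c2; lia.
  have eqn : a + c1 + c2 + 2 = a + 4 + r by rewrite /c1; lia.
  have := @construct a c1 c2 2 a3 ltac:(rewrite /c1; lia) isT ltac:(rewrite /c1; lia).
  rewrite eqn => -[e [e1 e2 e3 e4]]; exists e; split => //.
  rewrite e4.
  have hc12 : c1 + c2 = r + 2 by rewrite /c1; lia.
  have hm2 : m = a * (r + 2) + 4 + c2 by rewrite /c2; lia.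
  clearbody c1 c2; clear hc2 eqn e4; move: hc12 hm2 a3; move: c1 c2 => x y hxy -> ha3.
  have [a' ->] : exists a', a = a'.+1 by exists a.-1; lia.
  rewrite -hxy subSS subn0; nia.
have em : m = h * (n - 1 - h) + 2.
  have [k hk] : exists k, h = k.+1 by exists h.-1; lia.
  have [t [ht e1 e2 e3]] : exists t, [/\ t <= 1, n - h - 2 = k + t, n - 1 - h = k.+1 + t
     & n - h = k + 2 + t] by exists (n - 1 - 2 * h); split; lia.
  have e4 : h * (n - h - 2) + n - h = h * (k + t) + (k + 2 + t).
    by rewrite -e1 -e3 -addnBA; lia.
  rewrite e4 in hm; rewrite e2; rewrite e2 in hi; rewrite hk in hm hi *.
  nia.
have eqn : h + (n - 1 - h) + 0 + 1 = n by lia.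
have := @construct h (n - 1 - h) 0 1 ltac:(lia) ltac:(lia) isT ltac:(lia).
rewrite eqn => -[e [e1 e2 e3 e4]]; exists e; split => //.
by rewrite e4 em; lia.
Qed.
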